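(* Let $R$ be a nonsignaling bipartite resource of type $\mathsf{T}[\mathcal{X}]\,\mathsf{C}\to\mathsf{T}[\mathcal{A}]\,\mathsf{C}$, i.e. Bob's input $\mathcal{Y}$ and output $\mathcal{B}$ are classical, while Alice's input $\mathcal{X}$ and output $\mathcal{A}$ are of arbitrary type, and let $n=d[\mathcal{Y}]$ be the cardinality of Bob's input system. Then $R$ admits an $n$-symmetric extension if and only if $R$ is LOSR-free.
   Context: Systems have a dimension and a type in $\{\mathsf{I},\mathsf{C},\mathsf{Q}\}$ (trivial = dimension 1, classical, quantum). A resource is a completely positive linear map $R$ from operators on $\mathcal{X}\otimes\mathcal{Y}$ to operators on $\mathcal{A}\otimes\mathcal{B}$, trace preserving on product inputs, nonsignaling in both directions ($\mathrm{tr}_{\mathcal{A}}R[\xi\otimes\psi]$ independent of $\xi$, $\mathrm{tr}_{\mathcal{B}}R[\xi\otimes\psi]$ independent of $\psi$), with classicality constraints: for a classical output such as $\mathcal{B}$, $\langle i|R[\cdot]|j\rangle_{\mathcal{B}}=0$ for $i\neq j$; for a classical input such as $\mathcal{Y}$, $R[\xi\otimes|i\rangle\langle j|]=0$ for $i\ne j$. It is LOSR-free if $R=\sum_ip_iR^i_{\mathcal{A}|\mathcal{X}}\otimes R^i_{\mathcal{B}|\mathcal{Y}}$ for a probability distribution and single-party channels of the same types. An $n$-symmetric extension of $R$ is an $(n+1)$-party resource with parties $\mathcal{A}|\mathcal{X},\mathcal{B}_1|\mathcal{Y}_1,\dots,\mathcal{B}_n|\mathcal{Y}_n$ (copies of $\mathcal{B}|\mathcal{Y}$,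 of the same types), nonsignaling from any party to any other, invariant under all joint permutations of the copies, and whose reduction obtained by tracing out $\mathcal{B}_2,\dots,\mathcal{B}_n$ equals $R$. *)

(* Defs.v *)
From HB Require Import structures.
From mathcomp Require Import all_boot all_order all_algebra.
From mathcomp Require Import fingroup perm complex.
From mathcomp Require Import reals.
Set Implicit Arguments. Unset Strict Implicit. Unset Printing Implicit Defensive.
Import Order.TTheory GRing.Theory Num.Theory.
Local Open Scope ring_scope.

(* system types: trivial, classical, quantum *)
Inductive systype := SysI | SysC | SysQ.

Section Defs.
Variable R : realType.
Local Notation C := R[i].

(* operators on the Hilbert space with orthonormal basis indexed by T *)
Definition op (T : finType) := T -> T -> C.

Definition mtrace (T : finType) (M : op T) : C := \sum_(t : T) M t t.

Definition psd (T : finType) (M : op T) : Prop :=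
  forall v : T -> C, 0 <= \sum_(s : T) \sum_(t : T) (v s)^* * M s t * v t.

Definition density (T : finType) (M : op T) : Prop := psd M /\ mtrace M = 1.

Definition linmap (I O : finType) (L : op I -> op O) : Prop :=
  forall (a : C) (x y : op I) (o o' : O),
    L (fun i j => a * x i j + y i j) o o' = a * L x o o' + L y o o'.

(* complete positivity: id_k (x) L preserves positivity for every k *)
Definition cp (I O : finType) (L : op I -> op O) : Prop :=
  forall (k : nat) (s : op ('I_k * I)%type), psd s ->
    psd (fun (p q : 'I_k * O) => L (fun i j => s (p.1, i) (q.1, j)) p.2 q.2).

(* classical output subsystem (selected by proj): off-diagonal blocks vanish *)
Definition cl_out (I O K : finType) (proj : O -> K) (L : op I -> op O) : Prop :=
  forall (rho : op I) (o o' : O), proj o != proj o' -> L rho o o' = 0.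

(* classical input subsystem (selected by proj): L[xi (x) |i><j|] = 0 for i<>j.
   The operators of the form xi (x) |i><j| are exactly those supported on the
   (i,j) block of that subsystem. *)
Definition cl_in (I O K : finType) (proj : I -> K) (L : op I -> op O) : Prop :=
  forall (i j : K), i != j ->
  forall rho : op I, (forall x x', rho x x' != 0 -> proj x = i /\ proj x' = j) ->
  forall o o', L rho o o' = 0.

Definition tensor_op (T U : finType) (x : op T) (y : op U) : op (T * U)%type :=
  fun p q => x p.1 q.1 * y p.2 q.2.

Definition ptr_fst (T U : finType) (M : op (T * U)%type) : op U :=
  fun u u' => \sum_(t : T) M (t, u) (t, u').
Definition ptr_snd (T U : finType) (M : op (T * U)%type) : op T :=
  fun t t' => \sum_(u : U) M (t, u) (t', u).

Definition resource (dX dY dA dB : nat) (tX tY tA tB : systype)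
    (L : op ('I_dX * 'I_dY)%type -> op ('I_dA * 'I_dB)%type) : Prop :=
  linmap L /\ cp L /\
  (forall xi psi, density xi -> density psi ->
      mtrace (L (tensor_op xi psi)) = 1) /\
  (forall xi xi' psi, density xi -> density xi' -> density psi ->
      ptr_fst (L (tensor_op xi psi)) =2 ptr_fst (L (tensor_op xi' psi))) /\
  (forall xi psi psi', density xi -> density psi -> density psi' ->
      ptr_snd (L (tensor_op xi psi)) =2 ptr_snd (L (tensor_op xi psi'))) /\
  (tX = SysC -> cl_in fst L) /\ (tY = SysC -> cl_in snd L) /\
  (tA = SysC -> cl_out fst L) /\ (tB = SysC -> cl_out snd L).

Definition channel (dI dO : nat) (tI tO : systype)
    (L : op 'I_dI -> op 'I_dO) : Prop :=
  linmap L /\ cp L /\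
  (forall rho, density rho -> mtrace (L rho) = 1) /\
  (tI = SysC -> cl_in id L) /\ (tO = SysC -> cl_out id L).

(* tensor product of two maps, extended linearly to all operators *)
Definition tensor_map (I1 I2 O1 O2 : finType)
    (L1 : op I1 -> op O1) (L2 : op I2 -> op O2) : op (I1 * I2)%type -> op (O1 * O2)%type :=
  fun rho o o' => \sum_(y : I2) \sum_(y' : I2)
     L1 (fun x x' => rho (x, y) (x', y')) o.1 o'.1 *
     L2 (fun u u' => (u == y)%:R * (u' == y')%:R) o.2 o'.2.

Definition losr_free (dX dY dA dB : nat) (tX tY tA tB : systype)
    (L : op ('I_dX * 'I_dY)%type -> op ('I_dA * 'I_dB)%type) : Prop :=
  exists (m : nat) (p : 'I_m -> C)
         (RA : 'I_m -> op 'I_dX -> op 'I_dA) (RB : 'I_m -> op 'I_dY -> op 'I_dB),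
    (forall i, 0 <= p i) /\ \sum_(i < m) p i = 1 /\
    (forall i, channel tX tA (RA i)) /\ (forall i, channel tY tB (RB i)) /\
    (forall rho o o', L rho o o' = \sum_(i < m) p i * tensor_map (RA i) (RB i) rho o o').

(* ---- (n+1)-party extensions: parties A|X, B_1|Y_1, ..., B_n|Y_n ----
   Joint input index: (x, f) with f k the index of Y_k; similarly outputs. *)

Definition prod_in (n : nat) (T U : finType) (xi : op T) (psi : 'I_n -> op U) :
    op (T * {ffun 'I_n -> U})%type :=
  fun x x' => xi x.1 x'.1 * \prod_(k < n) psi k (x.2 k) (x'.2 k).

(* Partial trace over the outputs of the parties NOT kept (Alice kept iff ka,
   copy k kept iff k \in K), represented on full indices (depends only on the
   kept coordinates). *)
Definition mix (n : nat) (T U : finType) (ka : bool) (K : {set 'I_n})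
    (o w : T * {ffun 'I_n -> U}) : T * {ffun 'I_n -> U} :=
  (if ka then o.1 else w.1, [ffun k => if k \in K then o.2 k else w.2 k]).

Definition red (n : nat) (T U : finType) (ka : bool) (K : {set 'I_n})
    (M : op (T * {ffun 'I_n -> U})%type) : op (T * {ffun 'I_n -> U})%type :=
  fun o o' => \sum_(w : T * {ffun 'I_n -> U}
                    | (ka ==> (w.1 == o.1)) && [forall k in K, w.2 k == o.2 k])
                M (mix ka K o w) (mix ka K o' w).

Definition pidx (n : nat) (T U : finType) (s : {perm 'I_n})
    (x : T * {ffun 'I_n -> U}) : T * {ffun 'I_n -> U} :=
  (x.1, [ffun k => x.2 (s k)]).

Definition upd (n : nat) (U : finType) (g : {ffun 'I_n -> U}) (k0 : 'I_n) (b : U) :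
    {ffun 'I_n -> U} := [ffun k => if k == k0 then b else g k].

Definition ext_in (n : nat) (T U : finType) (k0 : 'I_n) (rho : op (T * U)%type)
    (psi : 'I_n -> op U) : op (T * {ffun 'I_n -> U})%type :=
  fun x x' => rho (x.1, x.2 k0) (x'.1, x'.2 k0) *
              \prod_(k < n | k != k0) psi k (x.2 k) (x'.2 k).

(* E is an n-symmetric extension of L, where copy k0 plays the role of B_1 *)
Definition sym_ext (dX dY dA dB : nat) (tX tY tA tB : systype) (n : nat) (k0 : 'I_n)
    (L : op ('I_dX * 'I_dY)%type -> op ('I_dA * 'I_dB)%type)
    (E : op ('I_dX * {ffun 'I_n -> 'I_dY})%type -> op ('I_dA * {ffun 'I_n -> 'I_dB})%type) : Prop :=
  linmap E /\ cp E /\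
  (forall xi psi, density xi -> (forall k, density (psi k)) ->
      mtrace (E (prod_in xi psi)) = 1) /\
  (* nonsignaling: the marginal of any set of parties is independent of the
     inputs of the other parties *)
  (forall (ka : bool) (K : {set 'I_n}) xi xi' psi psi',
      density xi -> density xi' -> (forall k, density (psi k)) ->
      (forall k, density (psi' k)) ->
      (ka -> xi =2 xi') -> (forall k, k \in K -> psi k =2 psi' k) ->
      red ka K (E (prod_in xi psi)) =2 red ka K (E (prod_in xi' psi'))) /\
  (forall (s : {perm 'I_n}) rho o o',
      E (fun x x' => rho (pidx s x) (pidx s x')) o o' = E rho (pidx s o) (pidx s o')) /\
  (tX = SysC -> cl_in fst E) /\ (tA = SysC -> cl_out fst E) /\
  (forall k : 'I_n, tY = SysC -> cl_in (fun x : ('I_dX * {ffun 'I_n -> 'I_dY})%type => x.2 k) E) /\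
  (forall k : 'I_n, tB = SysC -> cl_out (fun o : ('I_dA * {ffun 'I_n -> 'I_dB})%type => o.2 k) E) /\
  (* tracing out all copies B_k, k <> k0, gives back L *)
  (forall (rho : op ('I_dX * 'I_dY)%type) (psi : 'I_n -> op 'I_dY),
      (forall k, k != k0 -> density (psi k)) ->
      forall o o' : 'I_dA * 'I_dB,
        \sum_(g : {ffun 'I_n -> 'I_dB} | g k0 == o.2)
           E (ext_in k0 rho psi) (o.1, g) (o'.1, upd g k0 o'.2) = L rho o o').

Definition has_sym_ext (dX dY dA dB : nat) (tX tY tA tB : systype) (n : nat) (k0 : 'I_n)
    (L : op ('I_dX * 'I_dY)%type -> op ('I_dA * 'I_dB)%type) : Prop :=
  exists E, @sym_ext dX dY dA dB tX tY tA tB n k0 L E.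

End Defs.

(* Main.v *)
Require Import Defs.
From HB Require Import structures.
From mathcomp Require Import all_boot all_order all_algebra.
From mathcomp Require Import fingroup perm complex reals ring.
From Stdlib Require Import FunctionalExtensionality.
Set Implicit Arguments. Unset Strict Implicit. Unset Printing Implicit Defensive.
Import Order.TTheory GRing.Theory Num.Theory.
Local Open Scope ring_scope.

Section LibA.
Variable R : realType.
Local Notation C := R[i].

Lemma op_ext (T : finType) (x y : op R T) : x =2 y -> x = y.
Proof. move=> h; apply: functional_extensionality => a; apply: functional_extensionality => b; exact: h. Qed.

Section Lin.
Variables (I O : finType) (L : op R I -> op R O).
Hypothesis hL : linmap L.

Lemma lin_ext (x y : op R I) o o' : x =2 y -> L x o o' = L y o o'.
Proof. by move=> /op_ext ->. Qed.

Lemma lin0 o o' : L (fun _ _ => 0) o o' = 0.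
Proof.
have := hL 1 (fun _ _ => 0) (fun _ _ => 0) o o'.
rewrite (@lin_ext (fun i j => 1 * 0 + 0) (fun _ _ => 0)); last by move=> ? ?; rewrite mulr0 addr0.
rewrite mul1r => h; apply: (@addrI _ (L (fun _ _ => 0) o o')); by rewrite addr0 -h.
Qed.

Lemma linD (x y : op R I) o o' : L (fun i j => x i j + y i j) o o' = L x o o' + L y o o'.
Proof. rewrite -[L x o o']mul1r -(hL 1); apply: lin_ext => ? ?; by rewrite mul1r. Qed.

Lemma linZ a (x : op R I) o o' : L (fun i j => a * x i j) o o' = a * L x o o'.
Proof.
have := hL a x (fun _ _ => 0) o o'; rewrite lin0 addr0 => <-.
by apply: lin_ext => ? ?; rewrite addr0.
Qed.

Lemma lin_sum (J : Type) (r : seq J) (P : pred J) (f : J -> op R I) o o' :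
  L (fun i j => \sum_(k <- r | P k) f k i j) o o' = \sum_(k <- r | P k) L (f k) o o'.
Proof.
elim: r => [|k r IH].
  rewrite big_nil; transitivity (L (fun _ _ => 0) o o'); last exact: lin0; apply: lin_ext => ? ? /=; by rewrite big_nil.
rewrite big_cons; case hk: (P k).
  rewrite -IH -linD; apply: lin_ext => ? ?; by rewrite big_cons hk.
rewrite -IH; apply: lin_ext => ? ?; by rewrite big_cons hk.
Qed.

Definition eu (T : finType) (y y' : T) : op R T :=
  fun u u' => (u == y)%:R * (u' == y')%:R.

Lemma op_expand (x : op R I) : x =2 (fun i j => \sum_(k : I) \sum_(l : I) x k l * eu k l i j).
Proof.
move=> i j; rewrite (bigD1 i) //= [X in _ + X]big1 => [|k /negPf nk]; last first.
  by apply: big1 => l _; rewrite /eu eq_sym nk mul0r mulr0.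
rewrite addr0 (bigD1 j) //= [X in _ + X]big1 => [|l /negPf nl]; last by rewrite /eu (eq_sym j) nl !mulr0.
by rewrite /eu !eqxx mulr1 addr0 mulr1.
Qed.

Lemma lin_expand (x : op R I) o o' :
  L x o o' = \sum_(k : I) \sum_(l : I) x k l * L (eu k l) o o'.
Proof.
rewrite (lin_ext _ _ (op_expand x)) lin_sum; apply: eq_bigr => k _.
by rewrite lin_sum; apply: eq_bigr => l _; rewrite linZ.
Qed.

End Lin.

Lemma psd_ext (T : finType) (M N : op R T) : M =2 N -> psd M -> psd N.
Proof. by move=> /op_ext ->. Qed.

Lemma sum_part (A B : finType) (h : A -> B) (G : A -> B -> C) :
  \sum_(s : B) \sum_(p : A | h p == s) G p s = \sum_(p : A) G p (h p).
Proof.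
rewrite (exchange_big_dep xpredT) //=; apply: eq_bigr => p _.
by rewrite (big_pred1 (h p)) // => s; rewrite eq_sym.
Qed.

Lemma psd_comp (T U : finType) (M : op R T) (h : U -> T) (c : U -> C) :
  psd M -> psd (fun p q => (c p)^* * M (h p) (h q) * c q).
Proof.
move=> hM v; set w := fun s => \sum_(p : U | h p == s) c p * v p.
have := hM w; congr (0 <= _).
have e1 : forall s t, (w s)^* * M s t * w t =
    \sum_(p | h p == s) \sum_(q | h q == t) (c p * v p)^* * M s t * (c q * v q).
  move=> s t; rewrite /w rmorph_sum mulr_suml mulr_suml; apply: eq_bigr => p _.
  by rewrite mulr_sumr.
under eq_bigr => s _ do under eq_bigr => t _ do rewrite e1.
under eq_bigr => s _ do rewrite exchange_big /=.
rewrite (sum_part h (fun p s => \sum_t \sum_(q | h q == t) (c p * v p)^* * M s t * (c q * v q))).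
apply: eq_bigr => p _.
rewrite (sum_part h (fun q t => (c p * v p)^* * M (h p) t * (c q * v q))).
apply: eq_bigr => q _.
by rewrite rmorphM /= !mulrA (mulrC (c p)^*).
Qed.

Lemma psd_sum (T : finType) (J : finType) (M : J -> op R T) :
  (forall k, psd (M k)) -> psd (fun p q => \sum_(k : J) M k p q).
Proof.
move=> hM v.
rewrite (eq_bigr (fun s => \sum_k \sum_t (v s)^* * M k s t * v t)); last first.
  move=> s _; rewrite exchange_big /=; apply: eq_bigr => t _.
  by rewrite mulr_sumr mulr_suml; apply: eq_bigr => k _.
rewrite exchange_big /=; apply: sumr_ge0 => k _; exact: hM.
Qed.

Lemma psd_scale (T : finType) (M : op R T) (a : C) :
  0 <= a -> psd M -> psd (fun p q => a * M p q).
Proof.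
move=> ha hM v.
rewrite (eq_bigr (fun s => a * \sum_t (v s)^* * M s t * v t)); last first.
  by move=> s _; rewrite mulr_sumr; apply: eq_bigr => t _; rewrite !mulrA (mulrC (v s)^* a).
by rewrite -mulr_sumr; apply: mulr_ge0 => //; exact: hM.
Qed.

Lemma psd_diag (T : finType) (M : op R T) a : psd M -> 0 <= M a a.
Proof.
move=> hM; have := hM (fun s => (s == a)%:R); congr (0 <= _).
rewrite (bigD1 a) //= [X in _ + X]big1; last first.
  by move=> s /negPf ->; apply: big1 => t _; rewrite rmorph0 !mul0r.
rewrite addr0 (bigD1 a) //= [X in _ + X]big1; last by move=> t /negPf ->; rewrite mulr0.
by rewrite addr0 eqxx rmorph1 mul1r mulr1.
Qed.

Lemma sum2 (T : finType) (F : T -> C) a b : a != b ->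
  (forall s, s != a -> s != b -> F s = 0) -> \sum_s F s = F a + F b.
Proof.
move=> nab hF; rewrite (bigD1 a) //= (bigD1 b) 1?eq_sym //= big1 ?addr0 ?addrA //.
by move=> s /andP[sb sa]; apply: hF.
Qed.

Lemma psd_zero (T : finType) (M : op R T) a b :
  psd M -> M a a = 0 -> M b b = 0 -> M a b = 0.
Proof.
move=> hM ha hb; have [-> //|nab] := eqVneq a b.
have key : forall t : C, 0 <= t^* * M b a + t * M a b.
  move=> t; have := hM (fun s => (s == a)%:R + t * (s == b)%:R).
  congr (0 <= _).
  have va : forall s, s != a -> s != b -> (s == a)%:R + t * (s == b)%:R = 0 :> C.
    by move=> s /negPf -> /negPf ->; rewrite mulr0 addr0.
  rewrite (sum2 nab); last by move=> s sa sb; rewrite big1 // => u _; rewrite va // rmorph0 !mul0r.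
  rewrite (sum2 nab); last by move=> s sa sb; rewrite (va s) // mulr0.
  rewrite (sum2 nab); last by move=> s sa sb; rewrite (va s) // mulr0.
  rewrite !eqxx (negPf nab) (eq_sym b a) (negPf nab) ha hb.
  rewrite /= !mulr0 !mul0r !add0r !addr0 ?mulr1 ?rmorph1 ?mul1r ?mulr1.
  by rewrite addrC (mulrC (M a b)).
have h1 := key 1; have h2 := key (-1); have h3 := key 'i; have h4 := key (- 'i).
rewrite rmorph1 !mul1r in h1.
rewrite rmorphN rmorph1 !mulN1r -opprD oppr_ge0 in h2.
have s0 : M b a + M a b = 0 by apply/eqP; rewrite eq_le h2 h1.
rewrite rmorphN !mulNr -opprD oppr_ge0 in h4.
have s1 : 'i^* * M b a + 'i * M a b = 0 by apply/eqP; rewrite eq_le h3 h4.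
have hc : ('i : C)^* = - 'i by rewrite conjCi.
rewrite hc mulNr in s1.
have e : M b a = - M a b by apply/eqP; rewrite -subr_eq0 opprK s0.
move: s1; rewrite e mulrN opprK.
rewrite -mulr2n -mulrnAr => /eqP; rewrite mulf_eq0 mulrn_eq0 /= => /orP[|/eqP //].
by rewrite -[_ == 0]negbK neq0Ci.
Qed.

Section CP.
Variables (I O : finType) (L : op R I -> op R O).
Lemma cp_pos : cp L -> forall x, psd x -> psd (L x).
Proof.
move=> hc x hx.
have := hc 1%N (fun p q => x p.2 q.2) _.
move=> /(_ _) h.
have hs : psd (fun (p q : ('I_1 * I)%type) => x p.2 q.2).
  have := psd_comp (fun p : ('I_1 * I)%type => p.2) (fun _ => 1) hx.
  by apply: psd_ext => p q; rewrite rmorph1 mul1r mulr1.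
have := psd_comp (fun o : O => (ord0, o)) (fun _ => 1) (h hs).
by apply: psd_ext => p q /=; rewrite rmorph1 mul1r mulr1.
Qed.
End CP.


Lemma sum_ind (T : finType) (a : T) (F : T -> C) :
  \sum_(y : T) (a == y)%:R * F y = F a.
Proof.
rewrite (bigD1 a) //= big1 ?addr0; first by rewrite eqxx mul1r.
by move=> y; rewrite eq_sym => /negPf ->; rewrite mul0r.
Qed.

Lemma sum_ind' (T : finType) (a : T) (F : T -> C) :
  \sum_(y : T) (y == a)%:R * F y = F a.
Proof. by rewrite -(sum_ind a); apply: eq_bigr => y _; rewrite eq_sym. Qed.

Lemma prod_ind (I T : finType) (f g : {ffun I -> T}) :
  \prod_(k : I) ((f k == g k)%:R : C) = (f == g)%:R.
Proof.
have [->|nfg] := eqVneq f g; first by apply: big1 => k _; rewrite eqxx.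
have /existsP [k hk] : [exists k, f k != g k].
  apply: contraT; rewrite negb_exists => /forallP h.
  suff e : f = g by rewrite e eqxx in nfg.
  by apply/ffunP => k; apply/eqP; move: (h k); rewrite negbK.
by rewrite (bigD1 k) //= (negPf hk) mul0r.
Qed.

Lemma psd_ones : psd (fun _ _ : 'I_1 => (1 : C)).
Proof.
move=> v.
rewrite (eq_bigr (fun s => (v s)^* * \sum_t v t)); last first.
  by move=> s _; rewrite mulr_sumr; apply: eq_bigr => t _; rewrite mulr1.
by rewrite -mulr_suml -rmorph_sum mulrC mul_conjC_ge0.
Qed.

Lemma psd_rank1 (T : finType) (c : T -> C) : psd (fun p q => (c p)^* * c q).
Proof.
have := psd_comp (fun _ : T => ord0) c psd_ones.
by apply: psd_ext => p q; rewrite mulr1.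
Qed.

Lemma psd_rank1_nat (T : finType) (c : T -> nat) : psd (fun p q => ((c p)%:R * (c q)%:R : C)).
Proof. by have := psd_rank1 (fun p => (c p)%:R : C); apply: psd_ext => p q; rewrite conjC_nat. Qed.

Lemma eu_density (T : finType) (y : T) : density (eu y y).
Proof.
split; first exact: (psd_rank1_nat (fun p => nat_of_bool (p == y))).
by rewrite /mtrace /eu (bigD1 y) //= big1 ?addr0 ?eqxx ?mulr1 // => t /negPf ->; rewrite mulr0.
Qed.


Lemma ind2 (T : eqType) (a b y : T) (G : T -> T -> C) :
  (a == y)%:R * (b == y)%:R * G a b = (a == y)%:R * (b == y)%:R * G y y.
Proof.
have [->|na] := eqVneq a y; last by rewrite !mul0r.
have [->|nb] := eqVneq b y; last by rewrite mulr0 !mul0r.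
by [].
Qed.


Lemma ind_swap (T : eqType) (b b' c : T) :
  ((b == b')%:R * (c == b)%:R : C) = (c == b)%:R * (c == b')%:R.
Proof.
have [->|nb] := eqVneq c b; last by rewrite mulr0 !mul0r.
by rewrite mulr1 mul1r.
Qed.

Lemma supp_zero (T K : finType) (proj : T -> K) (i j : K) (rho : op R T) :
  i != j -> (forall x x', rho x x' != 0 -> proj x = i /\ proj x' = j) ->
  forall x x', proj x = proj x' -> rho x x' = 0.
Proof.
move=> nij hs x x' e; apply/eqP; apply: contraT => /hs [h1 h2].
by move: nij; rewrite -h1 -h2 e eqxx.
Qed.


Lemma sum_enum (T : finType) (F : T -> C) :
  \sum_(i < #|T|) F (enum_val i) = \sum_(t : T) F t.
Proof. by rewrite -big_enum_val. Qed.


Lemma if_nat (b : bool) (x : C) : (if b then x else 0) = b%:R * x.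
Proof. by case: b; rewrite ?mul1r ?mul0r. Qed.


Lemma ind1 (T : eqType) (y y' : T) (G : T -> C) :
  (y == y')%:R * G y' = (y == y')%:R * G y.
Proof. by have [->|_] := eqVneq y y'; rewrite ?mul0r. Qed.


Lemma prod_sum (I J : finType) (G : I -> J -> C) :
  \sum_(g : {ffun I -> J}) \prod_(k : I) G k (g k) = \prod_(k : I) \sum_(j : J) G k j.
Proof. by rewrite bigA_distr_bigA. Qed.


Lemma sum_ind_gen (T : finType) (y : T) (F : T -> C) (c : C) :
  \sum_(y' : T) F y' * ((y == y')%:R * c) = F y * c.
Proof.
rewrite -[RHS](sum_ind y (fun z => F z * c)); apply: eq_bigr => z _; ring.
Qed.

End LibA.
Arguments eu {R T} y y' _ _.
Arguments eu_density {R T} y.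
Arguments psd_ones {R}.

Section Dir1.
Variables (R : realType) (dX dA dB n : nat) (tX tA : systype).
Hypotheses (pX : (0 < dX)%N) (pA : (0 < dA)%N) (pn : (0 < n)%N).
Variable L : op R ('I_dX * 'I_n)%type -> op R ('I_dA * 'I_dB)%type.
Variable E : op R ('I_dX * {ffun 'I_n -> 'I_n})%type -> op R ('I_dA * {ffun 'I_n -> 'I_dB})%type.
Hypothesis hL : resource tX SysC tA SysC L.
Hypothesis hE : sym_ext tX SysC tA SysC (Ordinal pn) L E.
Local Notation C := R[i].
Local Notation k0 := (Ordinal pn).

Lemma E_lin : linmap E. Proof. by case: hE. Qed.
Lemma E_cp : cp E. Proof. by case: hE => _ []. Qed.
Lemma E_tp xi psi : density xi -> (forall k, density (psi k)) ->
      mtrace (E (prod_in xi psi)) = 1.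
Proof. by case: hE => _ [] _ [] h _; apply: h. Qed.
Lemma E_ns (ka : bool) (K : {set 'I_n}) xi xi' psi psi' :
      density xi -> density xi' -> (forall k, density (psi k)) ->
      (forall k, density (psi' k)) ->
      (ka -> xi =2 xi') -> (forall k, k \in K -> psi k =2 psi' k) ->
      red ka K (E (prod_in xi psi)) =2 red ka K (E (prod_in xi' psi')).
Proof. by case: hE => _ [] _ [] _ [] h _; apply: h. Qed.
Lemma E_perm (s : {perm 'I_n}) rho o o' :
      E (fun x x' => rho (pidx s x) (pidx s x')) o o' = E rho (pidx s o) (pidx s o').
Proof. by case: hE => _ [] _ [] _ [] _ [] h _; apply: h. Qed.
Lemma E_clX : tX = SysC -> cl_in fst E. Proof. by case: hE => _ [] _ [] _ [] _ [] _ []. Qed.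
Lemma E_clA : tA = SysC -> cl_out fst E. Proof. by case: hE => _ [] _ [] _ [] _ [] _ [] _ []. Qed.
Lemma E_red (rho : op R ('I_dX * 'I_n)%type) (psi : 'I_n -> op R 'I_n) :
      (forall k, k != k0 -> density (psi k)) ->
      forall o o' : 'I_dA * 'I_dB,
        \sum_(g : {ffun 'I_n -> 'I_dB} | g k0 == o.2)
           E (ext_in k0 rho psi) (o.1, g) (o'.1, upd g k0 o'.2) = L rho o o'.
Proof. by case: hE => _ [] _ [] _ [] _ [] _ [] _ [] _ [] _ [] _ h; apply: h. Qed.

Lemma L_lin : linmap L. Proof. by case: hL. Qed.
Lemma L_clY : cl_in snd L. Proof. by case: hL => _ [] _ [] _ [] _ [] _ [] _ [] h _; apply: h. Qed.
Lemma L_clB : cl_out snd L. Proof. by case: hL => _ [] _ [] _ [] _ [] _ [] _ [] _ [] _ h; apply: h. Qed.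

Definition vin : {ffun 'I_n -> 'I_n} := [ffun k => k].
Definition tv (s : op R 'I_dX) : op R ('I_dX * {ffun 'I_n -> 'I_n})%type :=
  fun x x' => s x.1 x'.1 * (x.2 == vin)%:R * (x'.2 == vin)%:R.
Definition blk (s : op R 'I_dX) (g : {ffun 'I_n -> 'I_dB}) a a' := E (tv s) (a, g) (a', g).
Definition x0 : 'I_dX := Ordinal pX.
Definition a0 : 'I_dA := Ordinal pA.
Definition rho0 : op R 'I_dX := eu x0 x0.
Definition P g := \sum_(a : 'I_dA) blk rho0 g a a.

Lemma psd_tv s : psd s -> psd (tv s).
Proof.
move=> hs; have := psd_comp (fun x : ('I_dX * {ffun 'I_n -> 'I_n})%type => x.1)
   (fun x => (x.2 == vin)%:R) hs.
by apply: psd_ext => p q; rewrite conjC_nat (mulrC (_%:R) (s _ _)).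
Qed.

Lemma prod_in_tv s : prod_in s (fun k => eu k k) = tv s.
Proof.
apply: op_ext => x x'; rewrite /prod_in /tv -mulrA; congr (_ * _).
rewrite /eu big_split /=.
have h : forall f : {ffun 'I_n -> 'I_n}, \prod_(k < n) ((f k == k)%:R : C) = (f == vin)%:R.
  by move=> f; rewrite -prod_ind; apply: eq_bigr => k _; rewrite /vin ffunE.
by rewrite !h.
Qed.

Lemma red_all (M : op R ('I_dA * {ffun 'I_n -> 'I_dB})%type) o o' :
  red false setT M o o' = \sum_(a : 'I_dA) M (a, o.2) (a, o'.2).
Proof.
rewrite /red.
transitivity (\sum_(w | xpredT w.1 && (fun _ g => g == o.2) w.1 w.2) M (w.1, o.2) (w.1, o'.2)).
  apply: eq_big => w /=.
    apply/forallP/eqP => [h|-> k]; last by rewrite in_setT eqxx.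
    by apply/ffunP => k; move: (h k); rewrite in_setT => /eqP.
  move=> /eqP ew; rewrite /mix /=; congr (M (_, _) (_, _)); apply/ffunP => k;
  by rewrite ffunE in_setT // ew.
rewrite -(pair_big_dep xpredT (fun _ g => g == o.2) (fun a g => M (a, o.2) (a, o'.2))).
by apply: eq_bigr => a _; rewrite big_pred1_eq.
Qed.

Lemma P_density s g : density s -> \sum_(a : 'I_dA) blk s g a a = P g.
Proof.
move=> hs.
have := E_ns (ka := false) (K := setT) hs (eu_density x0) (fun k => eu_density k) (fun k => eu_density k)
   (fun f => False_ind _ (notF f)) (fun _ _ _ _ => erefl) (a0, g) (a0, g).
by rewrite !red_all !prod_in_tv.
Qed.

Lemma E_pos s : psd s -> psd (E (tv s)).
Proof. by move=> hs; apply: cp_pos E_cp _ (psd_tv hs). Qed.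

Lemma P_ge0 g : 0 <= P g.
Proof.
apply: sumr_ge0 => a _; rewrite /blk.
exact: (psd_diag _ (E_pos (eu_density x0).1)).
Qed.

Lemma P_sum : \sum_g P g = 1.
Proof.
have := E_tp (eu_density x0) (fun k => eu_density k).
rewrite prod_in_tv /mtrace => <-.
rewrite /P exchange_big pair_big /=; apply: eq_bigr => -[a g] _ //.
Qed.


Lemma blk_expand s g a a' :
  blk s g a a' = \sum_(k : 'I_dX) \sum_(l : 'I_dX) s k l * blk (eu k l) g a a'.
Proof.
rewrite /blk (@lin_ext _ _ _ E _ (fun i j => \sum_(k : 'I_dX) \sum_(l : 'I_dX) s k l * tv (eu k l) i j)); last first.
  move=> i j; rewrite /tv (op_expand s) !mulr_suml; apply: eq_bigr => k _.
  by rewrite !mulr_suml; apply: eq_bigr => l _; rewrite !mulrA.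
rewrite (lin_sum E_lin); apply: eq_bigr => k _.
rewrite (lin_sum E_lin); apply: eq_bigr => l _.
by rewrite (linZ E_lin).
Qed.

Lemma blk_zero g : P g = 0 -> forall s a a', blk s g a a' = 0.
Proof.
move=> P0.
pose c := fun p : ('I_dX * ('I_dX * {ffun 'I_n -> 'I_n}))%type =>
  ((p.1 == p.2.1)%:R * (p.2.2 == vin)%:R : C).
have hsC : psd (fun p q => (c p)^* * c q) by apply: psd_rank1.
have J := E_cp hsC.
have Jg := psd_comp (fun p : ('I_dX * 'I_dA)%type => (p.1, (p.2, g))) (fun _ => 1) J.
have eJ : forall p q : ('I_dX * 'I_dA)%type,
    1^* * E (fun i j => (c (p.1, i))^* * c (q.1, j)) (p.2, g) (q.2, g) * 1
    = blk (eu p.1 q.1) g p.2 q.2.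
  move=> p q; rewrite rmorph1 mul1r mulr1 /blk; apply: lin_ext => i j.
  rewrite /c /tv /eu rmorphM /= !conjC_nat /= (eq_sym p.1) (eq_sym q.1).
  by rewrite !mulrA; congr (_ * _); rewrite -!mulrA; congr (_ * _); rewrite mulrC.
have {Jg} Jg' := psd_ext eJ Jg.
have diag0 : forall p : ('I_dX * 'I_dA)%type, blk (eu p.1 p.1) g p.2 p.2 = 0.
  have hsum : \sum_(p : ('I_dX * 'I_dA)%type) blk (eu p.1 p.1) g p.2 p.2 = 0.
    rewrite -(pair_big xpredT xpredT (fun x a => blk (eu x x) g a a)) /=.
    by apply: big1 => x _; rewrite P_density ?P0 //; apply: eu_density.
  move=> p; apply: (psumr_eq0P _ hsum) => // q _.
  exact: (psd_diag q Jg').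
move=> s a a'; rewrite blk_expand; apply: big1 => k _; apply: big1 => l _.
have := psd_zero Jg' (diag0 (k, a)) (diag0 (l, a')) => /= ->.
by rewrite mulr0.
Qed.


Definition blockop (rho : op R ('I_dX * 'I_n)%type) (y y' : 'I_n) : op R ('I_dX * 'I_n)%type :=
  fun p q => (p.2 == y)%:R * (q.2 == y')%:R * rho p q.
Definition rhoy (rho : op R ('I_dX * 'I_n)%type) (y : 'I_n) : op R 'I_dX :=
  fun x x' => rho (x, y) (x', y).

Lemma L_block rho o o' : L rho o o' = \sum_(y : 'I_n) L (blockop rho y y) o o'.
Proof.
rewrite (@lin_ext _ _ _ L _ (fun i j => \sum_(y : 'I_n) \sum_(y' : 'I_n) blockop rho y y' i j)); last first.
  move=> i j; rewrite /blockop.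
  under eq_bigr => y _ do under eq_bigr => y' _ do rewrite -mulrA.
  under eq_bigr => y _ do rewrite -mulr_sumr.
  by rewrite sum_ind sum_ind.
rewrite (lin_sum L_lin); apply: eq_bigr => y _.
rewrite (lin_sum L_lin) (bigD1 y) //= big1 ?addr0 // => y' ny.
apply: (L_clY (i := y) (j := y')); first by rewrite eq_sym.
move=> x x'; rewrite /blockop => h; split; apply/eqP; apply: contraNT h => /negPf ne;
  by rewrite ne /= ?mulr0n ?mul0r ?mulr0 ?mul0r eqxx.
Qed.

Lemma tperm_vin (y : 'I_n) (f : {ffun 'I_n -> 'I_n}) :
  (([ffun k => f (tperm k0 y k)] == vin)%:R : C) =
  (f k0 == y)%:R * \prod_(k | k != k0) (f k == tperm k0 y k)%:R.
Proof.
rewrite -prod_ind.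
rewrite (reindex_inj (h := tperm k0 y) (@perm_inj _ (tperm k0 y))) /=.
rewrite (bigD1 k0) //= ffunE tpermK /vin ffunE tpermL; congr (_ * _).
by apply: eq_bigr => k _; rewrite !ffunE tpermK.
Qed.

Lemma L_diag rho y o o' :
  L (blockop rho y y) o o' =
  (o.2 == o'.2)%:R * \sum_(g : {ffun 'I_n -> 'I_dB} | g y == o.2) blk (rhoy rho y) g o.1 o'.1.
Proof.
have [e|ne] := eqVneq o.2 o'.2; last by rewrite mul0r; apply: L_clB.
rewrite mul1r.
set s := tperm k0 y.
pose psi := fun k : 'I_n => eu (R := R) (s k) (s k).
rewrite -(@E_red (blockop rho y y) psi); last by move=> k _; apply: eu_density.
have hinj : injective (fun g : {ffun 'I_n -> 'I_dB} => [ffun k => g (s k)]).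
  move=> g1 g2 /ffunP h; apply/ffunP => k; move: (h (s k)); by rewrite !ffunE /s tpermK.
rewrite (reindex_inj hinj) /=.
apply: eq_big => g.
  by rewrite ffunE /s tpermL.
move=> /eqP hg.
have -> : upd [ffun k => g (s k)] k0 o'.2 = [ffun k => g (s k)].
  apply/ffunP => k; rewrite /upd !ffunE.
  have [ek|//] := eqVneq k k0.
  by rewrite -e -hg ffunE ek.
have hp : forall a : 'I_dA, pidx s (a, [ffun k => g (s k)]) = (a, g).
  move=> a; rewrite /pidx /=; congr (_, _); apply/ffunP => k.
  by rewrite !ffunE /s tpermK.
rewrite (@lin_ext _ _ _ E _ (fun x x' => tv (rhoy rho y) (pidx s x) (pidx s x'))).
  by rewrite E_perm !hp.
move=> x x'.
rewrite /ext_in /tv /pidx /= /s !tperm_vin /psi /eu /blockop /rhoy /=.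
rewrite /s big_split /=.
rewrite (ind2 _ _ _ (fun u v => rho (x.1, u) (x'.1, v))).
have ac : forall a b r p q : C, a * b * r * (p * q) = r * (a * p) * (b * q) by move=> *; ring.
exact: ac.
Qed.


Lemma main_id rho o o' : L rho o o' =
  \sum_(y : 'I_n) (o.2 == o'.2)%:R *
     \sum_(g : {ffun 'I_n -> 'I_dB} | g y == o.2) blk (rhoy rho y) g o.1 o'.1.
Proof. by rewrite L_block; apply: eq_bigr => y _; rewrite L_diag. Qed.

Definition Dch (s : op R 'I_dX) : op R 'I_dA :=
  fun a a' => mtrace s * ((a == a0)%:R * (a' == a0)%:R).

Lemma Dch_channel : channel tX tA Dch.
Proof.
split.
  move=> c x y o o'; rewrite /Dch /mtrace big_split /= -mulr_sumr; ring.
split.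
  move=> k s hs.
  have := @psd_sum _ _ _ (fun x : 'I_dX => (fun p q : ('I_k * 'I_dA)%type =>
     ((p.2 == a0)%:R)^* * s (p.1, x) (q.1, x) * (q.2 == a0)%:R))
     (fun x => psd_comp (fun p : ('I_k * 'I_dA)%type => (p.1, x)) (fun p => (p.2 == a0)%:R) hs).
  apply: psd_ext => p q; rewrite /Dch /mtrace mulr_suml; apply: eq_bigr => x _.
  rewrite conjC_nat; ring.
split.
  move=> s [_ hs]; rewrite {1}/mtrace /Dch hs (bigD1 a0) //= big1 ?eqxx ?mul1r ?addr0 //.
  by move=> a /negPf ->; rewrite mul0r mulr0.
split.
  move=> _ i j nij s hs o o'; rewrite /Dch /mtrace big1 ?mul0r // => x _.
  exact: (supp_zero nij hs).
move=> _ rho o o' no; rewrite /Dch.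
have [e|ne] := eqVneq o a0; last by rewrite mul0r mulr0.
by rewrite -e [o' == o]eq_sym (negPf no) !mulr0.
Qed.

Definition RAg g : op R 'I_dX -> op R 'I_dA :=
  fun s a a' => if P g == 0 then Dch s a a' else blk s g a a' / P g.

Lemma blk_lin g c x y a a' :
  blk (fun i j => c * x i j + y i j) g a a' = c * blk x g a a' + blk y g a a'.
Proof.
rewrite /blk -E_lin; apply: lin_ext => p q; rewrite /tv /=; ring.
Qed.

Lemma RAg_channel g : channel tX tA (RAg g).
Proof.
have [hD hDc hDt hDi hDo] : [/\ linmap Dch, cp Dch,
   (forall rho, density rho -> mtrace (Dch rho) = 1),
   (tX = SysC -> cl_in id Dch) & (tA = SysC -> cl_out id Dch)].
  by case: Dch_channel => [? [? [? [? ?]]]].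
rewrite /RAg; have [P0|Pn0] := eqVneq (P g) 0.
  by split.
split.
  by move=> c x y o o'; rewrite blk_lin mulrDl mulrA.
split.
  move=> k s hs.
  pose s' := fun (p q : ('I_k * ('I_dX * {ffun 'I_n -> 'I_n}))%type) =>
    s (p.1, p.2.1) (q.1, q.2.1) * (p.2.2 == vin)%:R * (q.2.2 == vin)%:R.
  have hs' : psd s'.
    have := psd_comp (fun p : ('I_k * ('I_dX * {ffun 'I_n -> 'I_n}))%type => (p.1, p.2.1))
      (fun p => (p.2.2 == vin)%:R) hs.
    by apply: psd_ext => p q; rewrite /s' conjC_nat; ring.
  have J := E_cp hs'.
  have Jg := psd_comp (fun p : ('I_k * 'I_dA)%type => (p.1, (p.2, g))) (fun _ => 1) J.
  have hP' : 0 <= (P g)^-1 by rewrite invr_ge0 P_ge0.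
  have := psd_scale hP' Jg.
  by apply: psd_ext => p q; rewrite rmorph1 mul1r mulr1 mulrC.
split.
  move=> rho hr; rewrite /mtrace -mulr_suml P_density // mulfV //.
split.
  move=> hX i j nij s hs o o'.
  rewrite /blk (E_clX hX nij (rho := tv s)) ?mul0r // => x x' h.
  apply: hs; apply: contraNneq h; rewrite /tv => ->; by rewrite !mul0r.
move=> hA s o o' no; rewrite /blk (E_clA hA (tv s)) ?mul0r //.
Qed.


Definition RBg (g : {ffun 'I_n -> 'I_dB}) : op R 'I_n -> op R 'I_dB :=
  fun M b b' => (b == b')%:R * \sum_(u : 'I_n) (g u == b)%:R * M u u.

Lemma RBg_channel g : channel SysC SysC (RBg g).
Proof.
split.
  move=> c x y o o'; rewrite /RBg.
  rewrite (eq_bigr (fun u => c * ((g u == o)%:R * x u u) + (g u == o)%:R * y u u)); last by move=> u _; ring.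
  rewrite big_split /= -mulr_sumr; ring.
split.
  move=> k s hs.
  have := @psd_sum _ _ _ (fun u : 'I_n => (fun p q : ('I_k * 'I_dB)%type =>
     ((g u == p.2)%:R)^* * s (p.1, u) (q.1, u) * (g u == q.2)%:R))
     (fun u => psd_comp (fun p : ('I_k * 'I_dB)%type => (p.1, u)) (fun p => (g u == p.2)%:R) hs).
  apply: psd_ext => p q; rewrite /RBg mulr_sumr; apply: eq_bigr => u _.
  rewrite conjC_nat mulrA ind_swap; ring.
split.
  move=> rho [_ hr]; rewrite /mtrace /RBg.
  under eq_bigr => b _ do rewrite eqxx mul1r.
  rewrite exchange_big /=; transitivity (mtrace rho); last exact: hr.
  apply: eq_bigr => u _.
  by rewrite -mulr_suml (eq_bigr (fun b => (g u == b)%:R * 1)) ?sum_ind ?mul1r // => b _; rewrite mulr1.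
split.
  move=> _ i j nij rho hs o o'; rewrite /RBg big1 ?mulr0 // => u _.
  by rewrite (supp_zero nij hs (x := u) (x' := u)) ?mulr0.
by move=> _ rho o o' no; rewrite /RBg (negPf no) mul0r.
Qed.

Lemma PRA g s a a' : P g * RAg g s a a' = blk s g a a'.
Proof.
rewrite /RAg; have [P0|Pn0] := eqVneq (P g) 0.
  by rewrite P0 mul0r blk_zero.
by rewrite mulrC divfK.
Qed.

Lemma RBg_eu g y y' b b' :
  RBg g (eu y y') b b' = (b == b')%:R * ((g y == b)%:R * (y == y')%:R).
Proof.
rewrite /RBg /eu; congr (_ * _).
rewrite (eq_bigr (fun u => (u == y)%:R * ((g u == b)%:R * (u == y')%:R))); last by move=> u _; ring.
by rewrite sum_ind'.
Qed.

Lemma dir1 : losr_free tX SysC tA SysC L.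
Proof.
exists #|{ffun 'I_n -> 'I_dB}|, (fun i => P (enum_val i)),
  (fun i => RAg (enum_val i)), (fun i => RBg (enum_val i)).
split; first by move=> i; apply: P_ge0.
split; first by rewrite -big_enum_val /= P_sum.
split; first by move=> i; apply: RAg_channel.
split; first by move=> i; apply: RBg_channel.
move=> rho o o'.
transitivity (\sum_(g : {ffun 'I_n -> 'I_dB}) P g * tensor_map (RAg g) (RBg g) rho o o'); last first.
  pose Fg := fun g => P g * tensor_map (RAg g) (RBg g) rho o o'.
  by rewrite (eq_bigr (fun i => Fg (enum_val i))) // -big_enum_val.
rewrite main_id.
transitivity (\sum_(g : {ffun 'I_n -> 'I_dB}) \sum_(y : 'I_n)
    (o.2 == o'.2)%:R * ((g y == o.2)%:R * blk (rhoy rho y) g o.1 o'.1)).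
  rewrite exchange_big /=; apply: eq_bigr => y _.
  rewrite -mulr_sumr big_mkcond /=; congr (_ * _); apply: eq_bigr => g _.
  exact: if_nat.
apply: eq_bigr => g _.
rewrite /tensor_map mulr_sumr; apply: eq_bigr => y _.
rewrite (eq_bigr (fun y' => (y == y')%:R * (RAg g (rhoy rho y) o.1 o'.1 * ((o.2 == o'.2)%:R * (g y == o.2)%:R)))); last first.
  move=> y' _; rewrite RBg_eu.
  transitivity ((y == y')%:R * (RAg g (fun x x' => rho (x, y) (x', y')) o.1 o'.1 * ((o.2 == o'.2)%:R * (g y == o.2)%:R))); first ring.
  by rewrite (ind1 y y' (fun z => RAg g (fun x x' => rho (x, y) (x', z)) o.1 o'.1 * ((o.2 == o'.2)%:R * (g y == o.2)%:R))).
rewrite sum_ind -PRA; ring.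
Qed.

End Dir1.

Section Dir2.
Variables (R : realType) (dX dA dB n : nat) (tX tA : systype).
Hypotheses (pn : (0 < n)%N).
Variable L : op R ('I_dX * 'I_n)%type -> op R ('I_dA * 'I_dB)%type.
Local Notation C := R[i].
Local Notation k0 := (Ordinal pn).
Variables (m : nat) (p : 'I_m -> C) (RA : 'I_m -> op R 'I_dX -> op R 'I_dA)
  (RB : 'I_m -> op R 'I_n -> op R 'I_dB).
Hypotheses (hp0 : forall i, 0 <= p i) (hp1 : \sum_(i < m) p i = 1)
  (hRA : forall i, channel tX tA (RA i)) (hRB : forall i, channel SysC SysC (RB i))
  (hLd : forall rho o o', L rho o o' = \sum_(i < m) p i * tensor_map (RA i) (RB i) rho o o').

Lemma RA_lin i : linmap (RA i). Proof. by case: (hRA i). Qed.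
Lemma RA_cp i : cp (RA i). Proof. by case: (hRA i) => _ []. Qed.
Lemma RA_tp i rho : density rho -> mtrace (RA i rho) = 1. Proof. by case: (hRA i) => _ [] _ [] h _; apply: h. Qed.
Lemma RA_clX i : tX = SysC -> cl_in id (RA i). Proof. by case: (hRA i) => _ [] _ [] _ []. Qed.
Lemma RA_clA i : tA = SysC -> cl_out id (RA i). Proof. by case: (hRA i) => _ [] _ [] _ [] _. Qed.
Lemma RB_lin i : linmap (RB i). Proof. by case: (hRB i). Qed.
Lemma RB_cp i : cp (RB i). Proof. by case: (hRB i) => _ []. Qed.
Lemma RB_tp i rho : density rho -> mtrace (RB i rho) = 1. Proof. by case: (hRB i) => _ [] _ [] h _; apply: h. Qed.
Lemma RB_clY i : cl_in id (RB i). Proof. by case: (hRB i) => _ [] _ [] _ [] h _; apply: h. Qed.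
Lemma RB_clB i : cl_out id (RB i). Proof. by case: (hRB i) => _ [] _ [] _ [] _ h; apply: h. Qed.

Definition Q i (b : 'I_dB) (y : 'I_n) := RB i (eu y y) b b.

Lemma Q_ge0 i b y : 0 <= Q i b y.
Proof. exact: (psd_diag _ (cp_pos (RB_cp i) (eu_density y).1)). Qed.

Lemma Q_sum i y : \sum_(b : 'I_dB) Q i b y = 1.
Proof. exact: (RB_tp i (eu_density y)). Qed.

Lemma RB_eu i y y' b b' : RB i (eu y y') b b' = (y == y')%:R * ((b == b')%:R * Q i b y).
Proof.
have [<-|ny] := eqVneq y y'; last first.
  rewrite mul0r; apply: (@RB_clY i y y' ny (eu y y')) => x x' h.
  by split; apply/eqP; apply: contraNT h => /negPf ne; rewrite /eu ne /= ?mulr0n ?mul0r ?mulr0 ?mul0r eqxx.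
have [<-|nb] := eqVneq b b'; last by rewrite mul0r mulr0; apply: (@RB_clB i).
by rewrite !mul1r.
Qed.

Definition Eop (rho : op R ('I_dX * {ffun 'I_n -> 'I_n})%type) :
    op R ('I_dA * {ffun 'I_n -> 'I_dB})%type :=
  fun o o' => (o.2 == o'.2)%:R * \sum_(i < m) p i *
    \sum_(h : {ffun 'I_n -> 'I_n}) (\prod_(k < n) Q i (o.2 k) (h k)) *
       RA i (fun x x' => rho (x, h) (x', h)) o.1 o'.1.


Lemma Eop_lin : linmap Eop.
Proof.
move=> c x y o o'; rewrite /Eop mulrCA -mulrDr; congr (_ * _).
rewrite mulr_sumr -big_split; apply: eq_bigr => i _ /=.
rewrite mulrCA -mulrDr; congr (_ * _).
rewrite mulr_sumr -big_split; apply: eq_bigr => h _ /=.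
rewrite (RA_lin i c (fun x0 x0' => x (x0, h) (x0', h)) (fun x0 x0' => y (x0, h) (x0', h))).
ring.
Qed.

Lemma Eop_clX : tX = SysC -> cl_in fst Eop.
Proof.
move=> hX i j nij rho hs o o'; rewrite /Eop.
rewrite big1 ?mulr0 // => l _; rewrite big1 ?mulr0 // => h _.
rewrite (@RA_clX l hX i j nij) ?mulr0 // => x x' h0.
exact: (hs (x, h) (x', h) h0).
Qed.

Lemma Eop_clA : tA = SysC -> cl_out fst Eop.
Proof.
move=> hA rho o o' no; rewrite /Eop.
rewrite big1 ?mulr0 // => l _; rewrite big1 ?mulr0 // => h _.
by rewrite (@RA_clA l hA) ?mulr0.
Qed.

Lemma Eop_clY k : cl_in (fun x : ('I_dX * {ffun 'I_n -> 'I_n})%type => x.2 k) Eop.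
Proof.
move=> i j nij rho hs o o'; rewrite /Eop.
rewrite big1 ?mulr0 // => l _; rewrite big1 ?mulr0 // => h _.
rewrite (@lin_ext _ _ _ (RA l) _ (fun _ _ => 0)) ?(lin0 (RA_lin l)) ?mulr0 // => x x'.
exact: (supp_zero nij hs).
Qed.

Lemma Eop_clB k : cl_out (fun o : ('I_dA * {ffun 'I_n -> 'I_dB})%type => o.2 k) Eop.
Proof.
move=> rho o o' no; rewrite /Eop.
have -> : (o.2 == o'.2) = false by apply/eqP => e; rewrite e eqxx in no.
by rewrite mul0r.
Qed.


Lemma Eop_perm (s : {perm 'I_n}) rho o o' :
  Eop (fun x x' => rho (pidx s x) (pidx s x')) o o' = Eop rho (pidx s o) (pidx s o').
Proof.
rewrite /Eop /pidx /=.
have -> : ([ffun k => o.2 (s k)] == [ffun k => o'.2 (s k)]) = (o.2 == o'.2).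
  apply/eqP/eqP => [/ffunP h|->] //; apply/ffunP => k.
  by move: (h ((s^-1)%g k)); rewrite !ffunE permKV.
congr (_ * _); apply: eq_bigr => i _; congr (_ * _).
have hinj : injective (fun h : {ffun 'I_n -> 'I_n} => [ffun k => h ((s^-1)%g k)]).
  move=> h1 h2 /ffunP e; apply/ffunP => k; move: (e (s k)); by rewrite !ffunE permK.
rewrite (reindex_inj hinj) /=; apply: eq_bigr => h _.
have -> : [ffun k => [ffun k => h ((s^-1)%g k)] (s k)] = h.
  by apply/ffunP => k; rewrite !ffunE permK.
congr (_ * _).
rewrite (reindex_inj (@perm_inj _ s)) /=; apply: eq_bigr => k _.
by rewrite !ffunE permK.
Qed.


Lemma Eop_cp : cp Eop.
Proof.
move=> k s hs.
pose N := fun (i : 'I_m) (h : {ffun 'I_n -> 'I_n}) (P Q : ('I_k * 'I_dA)%type) =>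
  RA i (fun x x' => s (P.1, (x, h)) (Q.1, (x', h))) P.2 Q.2.
have hN : forall i h, psd (N i h).
  move=> i h; apply: (@RA_cp i k (fun P Q : ('I_k * 'I_dX)%type => s (P.1, (P.2, h)) (Q.1, (Q.2, h)))).
  have := psd_comp (fun P : ('I_k * 'I_dX)%type => (P.1, (P.2, h))) (fun _ => 1) hs.
  by apply: psd_ext => P Q; rewrite rmorph1 mul1r mulr1.
pose w := fun (f0 : {ffun 'I_n -> 'I_dB}) (i : 'I_m) (h : {ffun 'I_n -> 'I_n}) =>
  p i * \prod_(l < n) Q i (f0 l) (h l).
have hw : forall f0 i h, 0 <= w f0 i h.
  by move=> f0 i h; apply: mulr_ge0 => //; apply: prodr_ge0 => l _; apply: Q_ge0.
pose T := fun f0 i h (P Q : ('I_k * ('I_dA * {ffun 'I_n -> 'I_dB}))%type) =>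
  ((P.2.2 == f0)%:R)^* * (w f0 i h * N i h (P.1, P.2.1) (Q.1, Q.2.1)) * (Q.2.2 == f0)%:R.
have hT : forall f0 i h, psd (T f0 i h).
  move=> f0 i h; exact: (psd_comp (fun P : ('I_k * ('I_dA * {ffun 'I_n -> 'I_dB}))%type => (P.1, P.2.1))
     (fun P => (P.2.2 == f0)%:R) (psd_scale (hw f0 i h) (hN i h))).
have := @psd_sum _ _ _ (fun f0 => fun P Q => \sum_(i < m) \sum_h T f0 i h P Q)
  (fun f0 => @psd_sum _ _ _ (fun i => fun P Q => \sum_h T f0 i h P Q)
     (fun i => @psd_sum _ _ _ (fun h => T f0 i h) (fun h => hT f0 i h))).
apply: psd_ext => u v /=.
transitivity (\sum_(f0 : {ffun 'I_n -> 'I_dB}) (u.2.2 == f0)%:R * ((v.2.2 == f0)%:R *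
   \sum_(i < m) p i * \sum_(h : {ffun 'I_n -> 'I_n}) (\prod_(l < n) Q i (f0 l) (h l)) * N i h (u.1, u.2.1) (v.1, v.2.1))).
  apply: eq_bigr => f0 _; rewrite !mulr_sumr; apply: eq_bigr => i _.
  rewrite !mulr_sumr; apply: eq_bigr => h _.
  by rewrite /T /w conjC_nat; ring.
rewrite sum_ind /Eop eq_sym; congr (_ * _).
Qed.


Definition qq i (psi : 'I_n -> op R 'I_n) k (b : 'I_dB) := \sum_(y : 'I_n) Q i b y * psi k y y.

Lemma qq_sum i psi k : density (psi k) -> \sum_(b : 'I_dB) qq i psi k b = 1.
Proof.
move=> [_ hk]; rewrite /qq exchange_big /=; rewrite -hk /mtrace; apply: eq_bigr => y _.
by rewrite -mulr_suml Q_sum mul1r.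
Qed.

Lemma Eop_prod xi psi o o' : Eop (prod_in xi psi) o o' =
  (o.2 == o'.2)%:R * \sum_(i < m) p i * (RA i xi o.1 o'.1 * \prod_(k < n) qq i psi k (o.2 k)).
Proof.
rewrite /Eop; congr (_ * _); apply: eq_bigr => i _; congr (_ * _).
have e : forall h : {ffun 'I_n -> 'I_n}, RA i (fun x x' => prod_in xi psi (x, h) (x', h)) o.1 o'.1 =
    (\prod_(k < n) psi k (h k) (h k)) * RA i xi o.1 o'.1.
  move=> h; rewrite -(linZ (RA_lin i)); apply: lin_ext => x x'.
  by rewrite /prod_in mulrC.
under eq_bigr => h _ do rewrite e.
rewrite (eq_bigr (fun h : {ffun 'I_n -> 'I_n} => RA i xi o.1 o'.1 * \prod_(k < n) (Q i (o.2 k) (h k) * psi k (h k) (h k)))); last first.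
  by move=> h _; rewrite big_split /=; ring.
by rewrite -mulr_sumr (@prod_sum _ _ _ (fun k y => Q i (o.2 k) y * psi k y y)).
Qed.

Lemma Eop_tp xi psi : density xi -> (forall k, density (psi k)) ->
  mtrace (Eop (prod_in xi psi)) = 1.
Proof.
move=> hx hps.
transitivity (\sum_(a : 'I_dA) \sum_(f : {ffun 'I_n -> 'I_dB}) Eop (prod_in xi psi) (a, f) (a, f)).
  by rewrite /mtrace pair_big /=; apply: eq_bigr => -[a f] _.
under eq_bigr => a _ do under eq_bigr => f _ do rewrite Eop_prod eqxx mul1r.
rewrite exchange_big /=.
under eq_bigr => f _ do rewrite exchange_big /=.
rewrite exchange_big /=; transitivity (\sum_(i < m) p i); last exact: hp1.
apply: eq_bigr => i _.
have trRA : \sum_(a : 'I_dA) RA i xi a a = 1 := RA_tp i hx.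
under eq_bigr => f _ do rewrite -mulr_sumr -mulr_suml trRA mul1r.
rewrite -mulr_sumr -[RHS]mulr1; congr (_ * _).
rewrite (@prod_sum _ _ _ (fun k b => qq i psi k b)).
by apply: big1 => k _; apply: qq_sum.
Qed.


Lemma sum_filter_prod i psi (K : {set 'I_n}) (o2 o2' : {ffun 'I_n -> 'I_dB}) :
  \sum_(f : {ffun 'I_n -> 'I_dB} | [forall k in K, f k == o2 k])
    \prod_(k < n) (([ffun k => if k \in K then o2 k else f k] k ==
                   [ffun k => if k \in K then o2' k else f k] k)%:R *
                   qq i psi k ([ffun k => if k \in K then o2 k else f k] k))
  = \sum_(f : {ffun 'I_n -> 'I_dB}) \prod_(k < n)
      (if k \in K then (f k == o2 k)%:R * ((o2 k == o2' k)%:R * qq i psi k (o2 k))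
       else qq i psi k (f k)).
Proof.
rewrite big_mkcond /=; apply: eq_bigr => f _.
case: ifP => [/forallP hf|hf].
  apply: eq_bigr => k _; rewrite !ffunE; case: ifP => kK.
    by move: (hf k); rewrite kK /= => /eqP ->; rewrite eqxx mul1r.
  by rewrite eqxx mul1r.
have /existsP [k /andP [kK nk]] : [exists k, (k \in K) && (f k != o2 k)].
  apply: contraFT hf; rewrite negb_exists => /forallP h; apply/forallP => k.
  by apply/implyP => kK; move: (h k); rewrite kK /= negbK.
by rewrite (bigD1 k) //= kK (negPf nk) !mul0r.
Qed.

Lemma red_formula (ka : bool) (K : {set 'I_n}) xi psi o o' :
  density xi -> (forall k, density (psi k)) ->
  red ka K (Eop (prod_in xi psi)) o o' =
  \sum_(i < m) p i * ((if ka then RA i xi o.1 o'.1 else 1) *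
     \prod_(k < n) (if k \in K then (o.2 k == o'.2 k)%:R * qq i psi k (o.2 k) else 1)).
Proof.
move=> hx hps.
rewrite /red.
pose G := fun (a : 'I_dA) (f : {ffun 'I_n -> 'I_dB}) =>
  Eop (prod_in xi psi) (mix ka K o (a, f)) (mix ka K o' (a, f)).
transitivity (\sum_(a : 'I_dA | ka ==> (a == o.1)) \sum_(f : {ffun 'I_n -> 'I_dB} | [forall k in K, f k == o.2 k]) G a f).
  rewrite pair_big_dep /=; apply: eq_bigr => -[a f] _ //.
rewrite /G; clear G.
under eq_bigr => a _ do under eq_bigr => f _ do rewrite Eop_prod.
transitivity (\sum_(i < m) p i *
  ((\sum_(a : 'I_dA | ka ==> (a == o.1)) RA i xi (mix ka K o (a, o.2)).1 (mix ka K o' (a, o.2)).1) *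
   (\sum_(f : {ffun 'I_n -> 'I_dB} | [forall k in K, f k == o.2 k])
    \prod_(k < n) (([ffun k => if k \in K then o.2 k else f k] k ==
                   [ffun k => if k \in K then o'.2 k else f k] k)%:R *
                   qq i psi k ([ffun k => if k \in K then o.2 k else f k] k))))).
  rewrite /mix /=.
  under eq_bigr => a _ do under eq_bigr => f _ do rewrite mulr_sumr.
  under eq_bigr => a _ do rewrite exchange_big /=.
  rewrite exchange_big /=; apply: eq_bigr => i _.
  rewrite big_distrlr /= mulr_sumr; apply: eq_bigr => a _.
  rewrite mulr_sumr; apply: eq_bigr => f _.
  rewrite big_split /= -prod_ind.
  have ac : forall a0 p0 r0 q0 : C, a0 * (p0 * (r0 * q0)) = p0 * (r0 * (a0 * q0)) by move=> *; ring.
  exact: ac.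
apply: eq_bigr => i _; congr (_ * _); congr (_ * _).
  case: ka => /=.
    by rewrite (big_pred1 o.1) // => a.
  exact: (RA_tp i hx).
rewrite sum_filter_prod (@prod_sum _ _ _ (fun k b => if k \in K then (b == o.2 k)%:R * ((o.2 k == o'.2 k)%:R * qq i psi k (o.2 k))
       else qq i psi k b)).
apply: eq_bigr => k _; case: ifP => kK.
  by rewrite sum_ind'.
exact: qq_sum.
Qed.


Lemma Eop_ns (ka : bool) (K : {set 'I_n}) xi xi' psi psi' :
      density xi -> density xi' -> (forall k, density (psi k)) ->
      (forall k, density (psi' k)) ->
      (ka -> xi =2 xi') -> (forall k, k \in K -> psi k =2 psi' k) ->
      red ka K (Eop (prod_in xi psi)) =2 red ka K (Eop (prod_in xi' psi')).
Proof.
move=> hx hx' hps hps' hxx hpp o o'; rewrite !red_formula //.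
apply: eq_bigr => i _; congr (_ * (_ * _)).
  by case: ka hxx => // h; apply: lin_ext; apply: h.
apply: eq_bigr => k _; case: ifP => // kK; congr (_ * _).
by rewrite /qq; apply: eq_bigr => y _; rewrite (hpp k kK).
Qed.

Lemma sum_prod_k0 (J : finType) (X : J -> C) (Y : 'I_n -> J -> C) :
  (forall k, k != k0 -> \sum_(j : J) Y k j = 1) ->
  \sum_(g : {ffun 'I_n -> J}) X (g k0) * \prod_(k < n | k != k0) Y k (g k) = \sum_(j : J) X j.
Proof.
move=> hY.
transitivity (\sum_(g : {ffun 'I_n -> J}) \prod_(k < n) (if k == k0 then X (g k) else Y k (g k))).
  apply: eq_bigr => g _; rewrite [RHS](bigD1 k0) //= ?eqxx; congr (_ * _).
  by apply: eq_bigr => k /negPf ->.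
rewrite (@prod_sum _ _ _ (fun k j => if k == k0 then X j else Y k j)).
rewrite (bigD1 k0) //= ?eqxx [X in _ * X]big1 ?mulr1 // => k /negPf nk.
by rewrite (eq_bigr (fun j => Y k j)) ?hY ?nk // => j _; rewrite nk.
Qed.

Lemma upd_eq (g : {ffun 'I_n -> 'I_dB}) b b' : g k0 = b -> (g == upd g k0 b') = (b == b').
Proof.
move=> hg; apply/eqP/eqP => [/ffunP e|<-].
  by move: (e k0); rewrite /upd ffunE eqxx hg.
by apply/ffunP => k; rewrite /upd ffunE; case: eqP => // ->.
Qed.

Lemma sum_g_Q i (h : {ffun 'I_n -> 'I_n}) b :
  \sum_(g : {ffun 'I_n -> 'I_dB} | g k0 == b) \prod_(k < n) Q i (g k) (h k) = Q i b (h k0).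
Proof.
rewrite big_mkcond /=.
rewrite (eq_bigr (fun g : {ffun 'I_n -> 'I_dB} => ((g k0 == b)%:R * Q i (g k0) (h k0)) *
   \prod_(k < n | k != k0) Q i (g k) (h k))); last first.
  move=> g _; rewrite if_nat (bigD1 k0) //=; ring.
rewrite (@sum_prod_k0 _ (fun c => (c == b)%:R * Q i c (h k0)) (fun k c => Q i c (h k))).
  by rewrite sum_ind'.
by move=> k _; apply: Q_sum.
Qed.

Lemma Eop_red (rho : op R ('I_dX * 'I_n)%type) (psi : 'I_n -> op R 'I_n) :
      (forall k, k != k0 -> density (psi k)) ->
      forall o o' : 'I_dA * 'I_dB,
        \sum_(g : {ffun 'I_n -> 'I_dB} | g k0 == o.2)
           Eop (ext_in k0 rho psi) (o.1, g) (o'.1, upd g k0 o'.2) = L rho o o'.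
Proof.
move=> hps o o'.
pose Phi := fun i (y : 'I_n) => Q i o.2 y * RA i (fun x x' => rho (x, y) (x', y)) o.1 o'.1.
transitivity ((o.2 == o'.2)%:R * \sum_(i < m) p i * \sum_(y : 'I_n) Phi i y).
  have e : forall i (h : {ffun 'I_n -> 'I_n}),
      RA i (fun x x' => ext_in k0 rho psi (x, h) (x', h)) o.1 o'.1 =
      (\prod_(k < n | k != k0) psi k (h k) (h k)) * RA i (fun x x' => rho (x, h k0) (x', h k0)) o.1 o'.1.
    move=> i h; rewrite -(linZ (RA_lin i)); apply: lin_ext => x x'.
    by rewrite /ext_in /= mulrC.
  rewrite /Eop /=.
  under eq_bigr => g hg do rewrite (upd_eq o'.2 (eqP hg)).
  rewrite -mulr_sumr; congr (_ * _).
  rewrite exchange_big /=; apply: eq_bigr => i _.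
  rewrite -mulr_sumr; congr (_ * _).
  rewrite (eq_bigr (fun g : {ffun 'I_n -> 'I_dB} => \sum_(h : {ffun 'I_n -> 'I_n})
     \prod_(k < n) Q i (g k) (h k) * ((\prod_(k < n | k != k0) psi k (h k) (h k)) *
       RA i (fun x x' => rho (x, h k0) (x', h k0)) o.1 o'.1))); last first.
    by move=> g _; apply: eq_bigr => h _; rewrite e.
  rewrite exchange_big /=.
  rewrite (eq_bigr (fun h : {ffun 'I_n -> 'I_n} => Phi i (h k0) *
     \prod_(k < n | k != k0) psi k (h k) (h k))); last first.
    move=> h _; rewrite -mulr_suml sum_g_Q /Phi; ring.
  rewrite (@sum_prod_k0 _ (Phi i) (fun k y => psi k y y)) //.
  by move=> k nk; case: (hps k nk).
rewrite hLd mulr_sumr; apply: eq_bigr => i _.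
rewrite mulrCA; congr (_ * _).
rewrite /tensor_map mulr_sumr; apply: eq_bigr => y _.
under eq_bigr => y' _ do rewrite RB_eu.
by rewrite sum_ind_gen /Phi; ring.
Qed.


Lemma dir2 : has_sym_ext tX SysC tA SysC k0 L.
Proof.
exists Eop.
split; first exact: Eop_lin.
split; first exact: Eop_cp.
split; first exact: Eop_tp.
split; first exact: Eop_ns.
split; first exact: Eop_perm.
split; first exact: Eop_clX.
split; first exact: Eop_clA.
split; first by move=> k _; apply: Eop_clY.
split; first by move=> k _; apply: Eop_clB.
exact: Eop_red.
Qed.

End Dir2.

Theorem proposition9 (R : realType) (dX dA dB n : nat) (tX tA : systype)
  (hX : tX = SysI -> dX = 1%N) (hA : tA = SysI -> dA = 1%N)
  (pX : (0 < dX)%N) (pA : (0 < dA)%N) (pB : (0 < dB)%N) (pn : (0 < n)%N)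
  (L : op R ('I_dX * 'I_n)%type -> op R ('I_dA * 'I_dB)%type) :
  resource tX SysC tA SysC L ->
  (has_sym_ext tX SysC tA SysC (Ordinal pn) L <-> losr_free tX SysC tA SysC L).
Proof.
move=> hL; split.
  by case=> E hE; apply: (@dir1 R dX dA dB n tX tA pX pA pn L E hL hE).
case=> m [p [RA [RB [hp0 [hp1 [hRA [hRB hLd]]]]]]].
exact: (@dir2 R dX dA dB n tX tA pn L m p RA RB hp0 hp1 hRA hRB hLd).
Qed.
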